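(* Let $p\ge1$ and let $d^{p}_{\mathrm{ERP}}$ be the ERP distance on finite sequences of vectors in $\mathbb{R}^d$. Then: (a) if $\bm A,\bm B$ are sequences of one-hot vectors (rows in $\{0,1\}^d$ with exactly one entry $1$) and $p=\infty$, then $d^{\infty}_{\mathrm{ERP}}(\bm A,\bm B)$ equals the Levenshtein (edit) distance between $\bm A$ and $\bm B$; (b) for all $\bm A\in\mathbb{R}^{m\times d}$, $\bm B\in\mathbb{R}^{n\times d}$: $d^p_{\mathrm{ERP}}(\bm A\oplus\bm0,\bm B)=d^p_{\mathrm{ERP}}(\bm0\oplus\bm A,\bm B)=d^p_{\mathrm{ERP}}(\bm A,\bm B)$, where $\bm0$ is a single zero row; (c) $d^p_{\mathrm{ERP}}(\bm A,\emptyset)=\sum_{i=1}^m\|\bm a_i\|_p$ for all $\bm A\in\mathbb{R}^{m\times d}$; (d) $d^p_{\mathrm{ERP}}(\bm A,\bm B)=d^p_{\mathrm{ERP}}(\bm B,\bm A)$ for all $\bm A,\bm B$; (e) for all $\bm A\in\mathbb{R}^{m\times d}$, $\bm B\in\mathbb{R}^{n\times d}$, $\bm C\in\mathbb{R}^{l\times d}$: $d^p_{\mathrm{ERP}}(\bm A,\bm B)\le d^p_{\mathrm{ERP}}(\bm A,\bm C)+d^p_{\mathrm{ERP}}(\bm C,\bm B)$; (f) $d^p_{\mathrm{ERP}}(\bm A,\bm A\oplus\bm0)=d^p_{\mathrm{ERP}}(\bm A,\bm A)=0$ for all $\bm A\in\mathbb{R}^{m\times d}$ (so $d^p_{\mathrm{ERP}}$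 is not a distance).
   Context: For $\bm A\in\mathbb{R}^{m\times d}$, $\bm B\in\mathbb{R}^{n\times d}$ (rows $\bm a_i,\bm b_i$), $\bm A\oplus\bm B$ is vertical concatenation, $\emptyset$ is the empty sequence, and $\bm A_{2:}$ removes the first row. The ERP distance is defined recursively: $d^p_{\mathrm{ERP}}(\bm A,\emptyset)=\sum_{i=1}^m\|\bm a_i\|_p$, $d^p_{\mathrm{ERP}}(\emptyset,\bm B)=\sum_{i=1}^n\|\bm b_i\|_p$, and otherwise $d^p_{\mathrm{ERP}}(\bm A,\bm B)=\min\{\|\bm a_1\|_p+d^p_{\mathrm{ERP}}(\bm A_{2:},\bm B),\ \|\bm b_1\|_p+d^p_{\mathrm{ERP}}(\bm A,\bm B_{2:}),\ \|\bm a_1-\bm b_1\|_p+d^p_{\mathrm{ERP}}(\bm A_{2:},\bm B_{2:})\}$. The Levenshtein distance is the minimum number of single-element insertions, deletions and substitutions transforming one sequence into the other. *)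

(* Defs.v *)
From HB Require Import structures.
From mathcomp Require Import all_boot all_order all_algebra.
From mathcomp Require Import all_classical all_reals all_analysis.
Set Implicit Arguments. Unset Strict Implicit. Unset Printing Implicit Defensive.
Import Order.TTheory GRing.Theory Num.Theory.
Local Open Scope ring_scope.

Section ERP.
Variables (R : realType) (d : nat).
Local Notation V := 'rV[R]_d.

(* The l_p norm on R^d, for p in [1, +oo] (p : \bar R; p = +oo gives the max norm).
   The value for p = -oo is irrelevant (always excluded by the hypothesis 1 <= p). *)
Definition pnorm (p : \bar R) (x : V) : R :=
  match p with
  | EFin q => (\sum_(i < d) `|x 0 i| `^ q) `^ q^-1
  | _ => \big[Num.max/0]_(i < d) `|x 0 i|
  end.

Fixpoint erp (p : \bar R) (A B : seq V) {struct A} : R :=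
  match A with
  | [::] => \sum_(b <- B) pnorm p b
  | a :: A' =>
      (fix erpA (B : seq V) : R :=
         match B with
         | [::] => \sum_(x <- A) pnorm p x
         | b :: B' =>
             Num.min (pnorm p a + erp p A' B)
               (Num.min (pnorm p b + erpA B')
                        (pnorm p (a - b) + erp p A' B'))
         end) B
  end.

Definition one_hot (x : V) : Prop :=
  (forall i, x 0 i = 0 \/ x 0 i = 1) /\ (exists! i, x 0 i = 1).

End ERP.

Section Lev.
Variable T : Type.

Definition edit1 (s t : seq T) : Prop :=
  (exists u v x, s = u ++ v /\ t = u ++ x :: v) \/
  (exists u v x, s = u ++ x :: v /\ t = u ++ v) \/
  (exists u v x y, s = u ++ x :: v /\ t = u ++ y :: v).

Inductive edits : nat -> seq T -> seq T -> Prop :=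
  | edits0 s : edits 0 s s
  | editsS k s u t : edit1 s u -> edits k u t -> edits k.+1 s t.

Definition is_levenshtein (s t : seq T) (n : nat) : Prop :=
  edits n s t /\ forall k, edits k s t -> (n <= k)%N.
End Lev.

(* Main.v *)
Require Import Defs.
From HB Require Import structures.
From mathcomp Require Import all_boot all_order all_algebra.
From mathcomp Require Import all_classical all_reals all_analysis.
From mathcomp Require Import zify ring lra.
Import Order.TTheory GRing.Theory Num.Theory.
Set Implicit Arguments. Unset Strict Implicit.
Local Open Scope ring_scope.

Lemma convq (R : realType) (q t u v : R) : 1 <= q -> 0 <= t -> t <= 1 -> 0 <= u -> 0 <= v ->
  (t * u + (1 - t) * v) `^ q <= t * u `^ q + (1 - t) * v `^ q.
Proof.
move=> q1 t0 t1 u0 v0.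
have := convex_powR q1 (Itv01 t0 t1) (x:=u) (y:=v).
rewrite !inE /= !in_itv /= !andbT => /(_ u0 v0).
by rewrite !convRE.
Qed.

Lemma powRVl (R : realType) (a q : R) : 0 <= a -> (a^-1) `^ q = (a `^ q)^-1.
Proof. by move=> a0; rewrite -powR_inv1 // -powRrM mulN1r powRN. Qed.

Lemma powRK (R : realType) (S q : R) : 0 <= S -> q != 0 -> (S `^ q^-1) `^ q = S.
Proof. by move=> S0 q0; rewrite -powRrM mulVf // powRr1. Qed.

Lemma powRK' (R : realType) (S q : R) : 0 <= S -> q != 0 -> (S `^ q) `^ q^-1 = S.
Proof. by move=> S0 q0; rewrite -powRrM mulfV // powRr1. Qed.

Lemma sum_powR0 (R : realType) (d : nat) (q : R) (f : 'I_d -> R) : q != 0 ->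
  (\sum_i `|f i| `^ q) `^ q^-1 = 0 -> forall i, f i = 0.
Proof.
move=> q0 h i.
have S0 : \sum_i `|f i| `^ q = 0.
  by rewrite -(powRK (sumr_ge0 _ (fun i _ => powR_ge0 _ _)) q0) h powR0.
have /psumr_eq0P H := S0.
have := H (fun i _ => powR_ge0 _ _) i isT.
by move/powR_eq0_eq0/normr0_eq0.
Qed.

Lemma split_id (R : realType) (a b x y : R) : a != 0 -> b != 0 -> a + b != 0 ->
  x + y = (a + b) * (a / (a + b) * (x / a) + (1 - a / (a + b)) * (y / b)).
Proof. move=> a0 b0 ab0; field. by rewrite a0 b0 ab0. Qed.

Lemma mink_core (R : realType) (d : nat) (q a b : R) (q1 : 1 <= q) (f g : 'I_d -> R) :
  0 < a -> 0 < b ->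
  a `^ q = \sum_i `|f i| `^ q -> b `^ q = \sum_i `|g i| `^ q ->
  \sum_i (`|f i| + `|g i|) `^ q <= (a + b) `^ q.
Proof.
move=> agt0 bgt0 ha hb.
have q0 : q != 0 by rewrite gt_eqF // (lt_le_trans _ q1).
have sgt0 : 0 < a + b by rewrite addr_gt0.
have Sxn0 : a `^ q != 0 by rewrite gt_eqF // powR_gt0.
have Syn0 : b `^ q != 0 by rewrite gt_eqF // powR_gt0.
have t0 : 0 <= a / (a + b) by rewrite divr_ge0 // ltW.
have t1 : a / (a + b) <= 1 by rewrite ler_pdivrMr // mul1r lerDl ltW.
have key i : (`|f i| + `|g i|) `^ q <=
    (a + b) `^ q * (a / (a + b) * (`|f i| `^ q / a `^ q) + (1 - a / (a + b)) * (`|g i| `^ q / b `^ q)).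
  rewrite [`|f i| + _](@split_id _ a b) ?gt_eqF //.
  rewrite powRM; [|exact: ltW|by rewrite addr_ge0 // mulr_ge0 ?subr_ge0 // divr_ge0 // ltW].
  rewrite ler_wpM2l ?powR_ge0 //.
  apply: le_trans (convq q1 t0 t1 _ _) _; try by rewrite divr_ge0 // ltW.
  rewrite !powRM ?normr_ge0 ?invr_ge0 ?(ltW agt0) ?(ltW bgt0) //.
  by rewrite !powRVl ?(ltW agt0) ?(ltW bgt0).
apply: le_trans (ler_sum _ (fun i _ => key i)) _.
rewrite -mulr_sumr big_split /= -!mulr_sumr -!mulr_suml -ha -hb !mulfV //.
by rewrite !mulr1 subrKC mulr1.
Qed.

Lemma lt_neqAle_ge0 (R : realType) (x : R) : x != 0 -> 0 <= x -> 0 < x.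
Proof. by move=> h1 h2; rewrite lt0r h1. Qed.

Lemma mink (R : realType) (d : nat) (q : R) (q1 : 1 <= q) (f g : 'I_d -> R) :
  (\sum_i `|f i + g i| `^ q) `^ q^-1 <=
  (\sum_i `|f i| `^ q) `^ q^-1 + (\sum_i `|g i| `^ q) `^ q^-1.
Proof.
have q0 : q != 0 by rewrite gt_eqF // (lt_le_trans _ q1).
have qge0 : 0 <= q by rewrite (le_trans _ q1).
have qi0 : 0 <= q^-1 by rewrite invr_ge0.
have Sx0 : 0 <= \sum_i `|f i| `^ q by rewrite sumr_ge0 // => i _; rewrite powR_ge0.
have Sy0 : 0 <= \sum_i `|g i| `^ q by rewrite sumr_ge0 // => i _; rewrite powR_ge0.
have [a0|a0] := eqVneq ((\sum_i `|f i| `^ q) `^ q^-1) 0.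
  have fi := sum_powR0 q0 a0.
  by rewrite a0 add0r; under eq_bigr => i _ do rewrite fi add0r.
have [b0|b0] := eqVneq ((\sum_i `|g i| `^ q) `^ q^-1) 0.
  have gi := sum_powR0 q0 b0.
  by rewrite b0 addr0; under eq_bigr => i _ do rewrite gi addr0.
have core := mink_core q1 (f := f) (g := g)
  (lt_neqAle_ge0 a0 (powR_ge0 _ _)) (lt_neqAle_ge0 b0 (powR_ge0 _ _))
  (powRK Sx0 q0) (powRK Sy0 q0).
have A : \sum_i `|f i + g i| `^ q <= \sum_i (`|f i| + `|g i|) `^ q.
  apply: ler_sum => i _; apply: ge0_ler_powR => //; rewrite ?nnegrE ?addr_ge0 //.
  exact: ler_normD.
have B := le_trans A core.
have := ge0_ler_powR qi0 _ _ B.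
rewrite powRK' ?addr_ge0 ?powR_ge0 //; apply; rewrite nnegrE ?powR_ge0 //.
by rewrite sumr_ge0 // => i _; rewrite powR_ge0.
Qed.

Section Gen.
Variables (R : realType) (T : Type) (w : T -> R) (c : T -> T -> R).

Fixpoint gd (A B : seq T) {struct A} : R :=
  match A with
  | [::] => \sum_(b <- B) w b
  | a :: A' =>
      (fix gA (B : seq T) : R :=
         match B with
         | [::] => \sum_(x <- A) w x
         | b :: B' =>
             Num.min (w a + gd A' B)
               (Num.min (w b + gA B')
                        (c a b + gd A' B'))
         end) B
  end.

Lemma gd_nil_l B : gd [::] B = \sum_(b <- B) w b. Proof. by []. Qed.
Lemma gd_nil_r A : gd A [::] = \sum_(a <- A) w a. Proof. by case: A. Qed.
Lemma gd_cons a A b B : gd (a :: A) (b :: B) =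
  Num.min (w a + gd A (b :: B)) (Num.min (w b + gd (a :: A) B) (c a b + gd A B)).
Proof. by []. Qed.

Lemma le_del a A B : gd (a :: A) B <= w a + gd A B.
Proof.
case: B => [|b B]; first by rewrite gd_nil_r big_cons gd_nil_r.
by rewrite gd_cons ge_min lexx.
Qed.

Lemma le_ins A b B : gd A (b :: B) <= w b + gd A B.
Proof.
case: A => [|a A]; first by rewrite gd_nil_l big_cons.
by rewrite gd_cons !ge_min lexx orbT.
Qed.

Lemma le_sub a A b B : gd (a :: A) (b :: B) <= c a b + gd A B.
Proof. by rewrite gd_cons !ge_min lexx !orbT. Qed.

Lemma attained A B :
  (A = [::] /\ B = [::]) \/
  (exists a A', A = a :: A' /\ gd A B = w a + gd A' B) \/
  (exists b B', B = b :: B' /\ gd A B = w b + gd A B') \/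
  (exists a A' b B', A = a :: A' /\ B = b :: B' /\ gd A B = c a b + gd A' B').
Proof.
case: A => [|a A]; case: B => [|b B].
- by left.
- by right; right; left; exists b, B; rewrite gd_nil_l big_cons.
- by right; left; exists a, A; rewrite !gd_nil_r big_cons.
- rewrite gd_cons.
  case: (leP (w a + gd A (b :: B)) (Num.min (w b + gd (a :: A) B) (c a b + gd A B))) => h.
    by right; left; exists a, A.
  case: (leP (w b + gd (a :: A) B) (c a b + gd A B)) => h2.
    by right; right; left; exists b, B.
  by right; right; right; exists a, A, b, B.
Qed.

Section Tri.
Hypothesis w0 : forall x, 0 <= w x.
Hypothesis h1 : forall b x, w b <= w x + c x b.
Hypothesis h2 : forall a x, w a <= c a x + w x.
Hypothesis h3 : forall a b x, c a b <= c a x + c x b.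

Lemma gd_tri A B C : gd A B <= gd A C + gd C B.
Proof.
move: {2}(size A + size B + size C)%N (leqnn (size A + size B + size C)) => n.
elim: n A B C => [|n IH] A B C.
  case: A => //; case: B => //; case: C => // _.
  by rewrite /= !big_nil addr0.
move=> hs.
have [[-> ->]|[[a [A' [eA eAC]]]|[[x [C' [eC eAC]]]|[a [A' [x [C' [eA [eC eAC]]]]]]]]] := attained A C.
- by rewrite [gd [::] [::]]/= big_nil add0r.
- subst A; rewrite eAC; apply: le_trans (le_del _ _ _) _; rewrite -addrA lerD2l.
  by apply: IH; move: hs; rewrite /=; lia.
- subst C; rewrite eAC.
  have [[Hc _]|[[y [C'' [eC eCB]]]|[[b [B' [eB eCB]]]|[y [C'' [b [B' [eC [eB eCB]]]]]]]]] := attained (x :: C') B.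
  + by case: Hc.
  + case: eC => <- <- in eCB *; rewrite eCB.
    apply: le_trans (IH A B C' _) _; first by move: hs; rewrite /=; lia.
    by rewrite addrCA addrA lerD2r addrA lerDr addr_ge0.
  + subst B; rewrite eCB; apply: le_trans (le_ins _ _ _) _.
    rewrite -eAC addrCA lerD2l; apply: IH; move: hs; rewrite /=; lia.
  + case: eC => <- <- in eCB *; subst B; rewrite eCB.
    apply: le_trans (le_ins _ _ _) _.
    apply: le_trans (lerD (h1 b x) (IH A B' C' _)) _.
      by move: hs; rewrite /=; lia.
    by rewrite addrACA [c x b + _]addrC addrA.
- subst A C; rewrite eAC.
  have [[Hc _]|[[y [C'' [eC eCB]]]|[[b [B' [eB eCB]]]|[y [C'' [b [B' [eC [eB eCB]]]]]]]]] := attained (x :: C') B.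
  + by case: Hc.
  + case: eC => <- <- in eCB *; rewrite eCB.
    apply: le_trans (le_del _ _ _) _.
    apply: le_trans (lerD (h2 a x) (IH A' B C' _)) _.
      by move: hs; rewrite /=; lia.
    by rewrite addrACA [w x + _]addrC addrA.
  + subst B; rewrite eCB; apply: le_trans (le_ins _ _ _) _.
    rewrite -eAC addrCA lerD2l; apply: IH; move: hs; rewrite /=; lia.
  + case: eC => <- <- in eCB *; subst B; rewrite eCB.
    apply: le_trans (le_sub _ _ _ _) _.
    apply: le_trans (lerD (h3 a b x) (IH A' B' C' _)) _.
      by move: hs; rewrite /=; lia.
    by rewrite addrACA.
Qed.
End Tri.


Lemma gd_sym (cs : forall a b, c a b = c b a) A B : gd A B = gd B A.
Proof.
elim: A B => [|a A IHA] B; first by rewrite gd_nil_r.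
elim: B => [|b B IHB]; first by rewrite gd_nil_r.
rewrite !gd_cons IHA IHB IHA cs.
by rewrite minCA.
Qed.

Lemma gd_ge0 (w0 : forall x, 0 <= w x) (c0 : forall a b, 0 <= c a b) A B : 0 <= gd A B.
Proof.
elim: A B => [|a A IHA] B; first by rewrite gd_nil_l sumr_ge0.
elim: B => [|b B IHB]; first by rewrite gd_nil_r sumr_ge0.
by rewrite gd_cons !le_min !addr_ge0.
Qed.

Lemma gd_diag (cd : forall a, c a a = 0) A : gd A A <= 0.
Proof.
elim: A => [|a A IH]; first by rewrite gd_nil_l big_nil.
by apply: le_trans (le_sub _ _ _ _) _; rewrite cd add0r.
Qed.

Lemma gd_rcons (cd : forall a, c a a = 0) A z : gd (rcons A z) A <= w z.
Proof.
elim: A => [|a A IH]; first by rewrite /= big_cons big_nil addr0.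
by rewrite rcons_cons; apply: le_trans (le_sub _ _ _ _) _; rewrite cd add0r.
Qed.

End Gen.

Section PN.
Variables (R : realType) (d : nat).
Implicit Types (x y : 'rV[R]_d) (p : \bar R).

Lemma pnorm_ge0 p x : 0 <= pnorm p x.
Proof. by case: p => [q||] /=; rewrite ?powR_ge0 ?bigmax_ge_id. Qed.

Lemma pnormN p x : pnorm p (- x) = pnorm p x.
Proof.
by case: p => [q||] /=; [congr (_ `^ _)|..]; apply: eq_bigr => i _; rewrite mxE normrN.
Qed.

Lemma pnorm0 p : (1 <= p)%E -> pnorm p (0 : 'rV[R]_d) = 0.
Proof.
case: p => [q||] //=.
  rewrite lee_fin => q1.
  have q0 : q != 0 by rewrite gt_eqF // (lt_le_trans _ q1).
  rewrite big1 ?powR0 ?invr_neq0 // => i _.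
  by rewrite mxE normr0 powR0.
by move=> _; apply: bigmax_eq_id => i _; rewrite mxE normr0.
Qed.

Lemma pnormD p x y : (1 <= p)%E -> pnorm p (x + y) <= pnorm p x + pnorm p y.
Proof.
case: p => [q||] //=.
  rewrite lee_fin => q1.
  have := mink q1 (fun i => x 0 i) (fun i => y 0 i).
  by under eq_bigr => i _ do rewrite mxE.
move=> _; apply: bigmax_le => [|i _]; first by rewrite addr_ge0 ?bigmax_ge_id.
rewrite mxE; apply: le_trans (ler_normD _ _) _.
by apply: lerD; apply: (le_bigmax _ (fun i => `|_ 0 i|)).
Qed.

Lemma erp_gd p (A B : seq 'rV[R]_d) : erp p A B = gd (pnorm p) (fun a b => pnorm p (a - b)) A B.
Proof.
elim: A B => [|a A IHA] B; first by [].
elim: B => [|b B IHB]; first by [].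
by rewrite gd_cons -IHB -IHA -IHA.
Qed.
End PN.

Section LevSec.
Variables (R : realType) (T : eqType).
Definition lw : T -> R := fun _ => 1.
Definition lc : T -> T -> R := fun a b => (a != b)%:R.
Local Notation L := (gd lw lc).

Lemma lc_tri a b x : lc a b <= lc a x + lc x b.
Proof.
rewrite /lc; have [->|axne] := eqVneq a x; first by rewrite ?eqxx /= add0r.
have [<-|xbne] := eqVneq x b; first by rewrite axne /= addr0.
by case: (a != b); rewrite /= ?mulr1n ?mulr0n; lra.
Qed.

Lemma L_tri A B C : L A B <= L A C + L C B.
Proof.
apply: gd_tri => [x|b x|a x|a b x]; rewrite /lw ?ler01 //.
- by rewrite lerDl /lc ler0n.
- by rewrite lerDr /lc ler0n.
- exact: lc_tri.
Qed.

Lemma lc_diag a : lc a a = 0. Proof. by rewrite /lc eqxx. Qed.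

Lemma L_diag A : L A A <= 0.
Proof. exact: gd_diag lc_diag A. Qed.

Lemma L_prefix u v t : L (u ++ v) (u ++ t) <= L v t.
Proof.
elim: u => [|x u IH] //=.
by apply: le_trans (le_sub _ _ _ _ _ _) _; rewrite lc_diag add0r.
Qed.

Lemma lc_le1 a b : lc a b <= 1.
Proof. by rewrite /lc; case: (a != b); rewrite ?ler01. Qed.

Lemma L_edit1 s t : edit1 s t -> L s t <= 1.
Proof.
case=> [[u [v [x [-> ->]]]]|[[u [v [x [-> ->]]]]|[u [v [x [y [-> ->]]]]]]];
  apply: le_trans (L_prefix _ _ _) _.
- apply: le_trans (le_ins _ _ _ _ _) _.
  by rewrite /lw gerDl L_diag.
- apply: le_trans (le_del _ _ _ _ _) _.
  by rewrite /lw gerDl L_diag.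
- apply: le_trans (le_sub _ _ _ _ _ _) _.
  by apply: le_trans (lerD (lc_le1 x y) (L_diag v)) _; rewrite addr0.
Qed.

Lemma L_lower k s t : edits k s t -> L s t <= k%:R.
Proof.
elim=> [s'|k' s' u t' e1 _ IH]; first exact: L_diag.
apply: le_trans (L_tri s' t' u) _.
by rewrite -natr1 addrC lerD // L_edit1.
Qed.

Lemma edit1_cons (x : T) (s u : seq T) : edit1 s u -> edit1 (x :: s) (x :: u).
Proof.
case=> [[u0 [v [y [-> ->]]]]|[[u0 [v [y [-> ->]]]]|[u0 [v [y [z [-> ->]]]]]]].
- by left; exists (x :: u0), v, y.
- by right; left; exists (x :: u0), v, y.
- by right; right; exists (x :: u0), v, y, z.
Qed.

Lemma edits_cons k (x : T) (s t : seq T) : edits k s t -> edits k (x :: s) (x :: t).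
Proof.
elim=> [s'|k' s' u t' e1 _ IH]; first exact: edits0.
exact: editsS (edit1_cons x e1) IH.
Qed.

Lemma L_nat A B : exists n : nat, L A B = n%:R /\ edits n A B.
Proof.
move: {2}(size A + size B)%N (leqnn (size A + size B)) => m.
elim: m A B => [|m IH] A B.
  case: A => //; case: B => // _; exists 0%N; split; [by rewrite /= big_nil|exact: edits0].
move=> hs.
have [[-> ->]|[[a [A' [eA e]]]|[[b [B' [eB e]]]|[a [A' [b [B' [eA [eB e]]]]]]]]] := attained lw lc A B.
- by exists 0%N; split; [rewrite /= big_nil|exact: edits0].
- subst A; have [n [en ed]] := IH A' B (ltac:(move: hs; rewrite /=; lia)).
  exists n.+1; split; first by rewrite e en /lw -natr1 addrC.
  apply: editsS ed; right; left; exists [::], A', a; by split.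
- subst B; have [n [en ed]] := IH A B' (ltac:(move: hs; rewrite /=; lia)).
  exists n.+1; split; first by rewrite e en /lw -natr1 addrC.
  apply: (@editsS _ _ _ (b :: A)); first by left; exists [::], A, b.
  exact: edits_cons.
- subst A B; have [n [en ed]] := IH A' B' (ltac:(move: hs; rewrite /=; lia)).
  have [eab|nab] := eqVneq a b.
    subst b; exists n; split; first by rewrite e en lc_diag add0r.
    exact: edits_cons.
  exists n.+1; split; first by rewrite e en /lc nab -natr1 addrC.
  apply: (@editsS _ _ _ (b :: A')); first by right; right; exists [::], A', a, b.
  exact: edits_cons.
Qed.
End LevSec.

Lemma gd_ext (R : realType) (T : eqType) (P : T -> Prop) (w w' : T -> R) (c c' : T -> T -> R) :
  (forall x, P x -> w x = w' x) -> (forall x y, P x -> P y -> c x y = c' x y) ->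
  forall A B, (forall a, a \in A -> P a) -> (forall b, b \in B -> P b) ->
  gd w c A B = gd w' c' A B.
Proof.
move=> hw hc; elim=> [|a A IHA] B hA hB.
  by rewrite !gd_nil_l; apply: eq_big_seq => b hb; exact: hw (hB b hb).
have hA' : forall x, x \in A -> P x by move=> x hx; apply: hA; rewrite in_cons hx orbT.
have ha : P a by apply: hA; rewrite mem_head.
elim: B hB => [|b B IHB] hB.
  by rewrite !gd_nil_r; apply: eq_big_seq => x hx; exact: hw (hA x hx).
have hB' : forall x, x \in B -> P x by move=> x hx; apply: hB; rewrite in_cons hx orbT.
have hb : P b by apply: hB; rewrite mem_head.
by rewrite !gd_cons IHA // IHA // IHB // hw // hw // hc.
Qed.

Section OH.
Variables (R : realType) (d : nat).

Lemma oh_norm (a : 'rV[R]_d) : one_hot a -> pnorm +oo%E a = 1.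
Proof.
move=> [h01 [i [hi _]]] /=; apply/le_anti/andP; split.
  apply: bigmax_le => [|j _]; first exact: ler01.
  by case: (h01 j) => ->; rewrite ?normr0 ?normr1 ?ler01.
by apply: le_trans (le_bigmax _ (fun j => `|a 0 j|) i); rewrite hi normr1.
Qed.

Lemma oh_sub (a b : 'rV[R]_d) : one_hot a -> one_hot b ->
  pnorm +oo%E (a - b) = @lc R _ a b.
Proof.
move=> [ha _] [hb _]; rewrite /lc.
have [->|nab] := eqVneq a b; first by rewrite subrr pnorm0 ?leey.
have [j hj] : exists j, a 0 j != b 0 j.
  case: (boolP [exists j, a 0 j != b 0 j]) => [/existsP //|/existsPn hn].
  by case/eqP: nab; apply/rowP => j; move: (hn j); rewrite negbK => /eqP.
rewrite /=; apply/le_anti/andP; split.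
  apply: bigmax_le => [|k _]; first exact: ler01.
  by rewrite !mxE; case: (ha k) => ->; case: (hb k) => ->;
    rewrite ?subrr ?sub0r ?subr0 ?normrN ?normr0 ?normr1 ?ler01.
apply: le_trans (le_bigmax _ (fun k => `|(a - b) 0 k|) j).
rewrite !mxE; move: hj; case: (ha j) => ->; case: (hb j) => ->;
  rewrite ?eqxx // => _; rewrite ?subrr ?sub0r ?subr0 ?normrN ?normr0 ?normr1 //.
Qed.
End OH.

Theorem lemma1 (R : realType) (d : nat) (p : \bar R) (hp : (1 <= p)%E) :
  (* (a) p = +oo, one-hot sequences: ERP = Levenshtein distance *)
  (forall A B : seq 'rV[R]_d,
      (forall a, a \in A -> one_hot a) -> (forall b, b \in B -> one_hot b) ->
      exists n : nat, is_levenshtein A B n /\ erp +oo%E A B = n%:R) /\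
  (* (b) appending / prepending a zero row *)
  (forall A B : seq 'rV[R]_d,
      erp p (rcons A 0) B = erp p A B /\ erp p (0 :: A) B = erp p A B) /\
  (* (c) *)
  (forall A : seq 'rV[R]_d, erp p A [::] = \sum_(a <- A) pnorm p a) /\
  (* (d) symmetry *)
  (forall A B : seq 'rV[R]_d, erp p A B = erp p B A) /\
  (* (e) triangle inequality *)
  (forall A B C : seq 'rV[R]_d, erp p A B <= erp p A C + erp p C B) /\
  (* (f) *)
  (forall A : seq 'rV[R]_d, erp p A (rcons A 0) = erp p A A /\ erp p A A = 0).
Proof.
pose W := @pnorm R d p; pose C := fun a b : 'rV[R]_d => pnorm p (a - b).
have w0 : forall x, 0 <= W x by move=> x; exact: pnorm_ge0.
have c0 : forall x y, 0 <= C x y by move=> x y; exact: pnorm_ge0.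
have h1 : forall b x, W b <= W x + C x b.
  move=> b x; rewrite /W /C.
  have e : b = x + (- (x - b)) by rewrite opprB addrC subrK.
  by have := pnormD (p:=p) x (- (x - b)) hp; rewrite pnormN -e.
have h2 : forall a x, W a <= C a x + W x.
  move=> a x; rewrite /W /C.
  have e : a = (a - x) + x by rewrite subrK.
  by rewrite {1}e; apply: le_trans (pnormD (p:=p) _ _ hp) _.
have h3 : forall a b x, C a b <= C a x + C x b.
  move=> a b x; rewrite /C.
  have e : a - b = (a - x) + (x - b) by rewrite addrA subrK.
  by rewrite e; apply: le_trans (pnormD (p:=p) _ _ hp) _.
have cs : forall a b, C a b = C b a by move=> a b; rewrite /C -opprB pnormN.
have cd : forall a, C a a = 0 by move=> a; rewrite /C subrr pnorm0.
have W0 : W 0 = 0 by rewrite /W pnorm0.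
have E : forall A B : seq 'rV[R]_d, erp p A B = gd W C A B by move=> A B; exact: erp_gd.
have tri := gd_tri w0 h1 h2 h3.
have sym := gd_sym W cs.
have ge0 := gd_ge0 w0 c0.
have diag := gd_diag W cd.
have diag0 : forall A, gd W C A A = 0 by move=> A; apply/le_anti; rewrite diag ge0.
have rc0 : forall A, gd W C A (rcons A 0) = 0.
  move=> A; apply/le_anti; rewrite ge0 andbT sym.
  by apply: le_trans (gd_rcons W cd _ _) _; rewrite W0.
split.
  move=> A B hA hB.
  have [n [en ed]] := L_nat R A B.
  exists n; split; last first.
    rewrite erp_gd -en; apply: (gd_ext (P := @one_hot R d)) => //.
      by move=> x hx; rewrite oh_norm.
    by move=> x y hx hy; rewrite oh_sub.
  split => // k ek; have := L_lower R ek; rewrite en ler_nat //.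
split.
  move=> A B; rewrite !E; split; apply/le_anti/andP; split.
  - apply: le_trans (tri _ _ A) _.
    by rewrite -[X in _ <= X]add0r lerD2r -W0 (gd_rcons W cd).
  - apply: le_trans (tri _ _ (rcons A 0)) _.
    by rewrite rc0 add0r.
  - by apply: le_trans (le_del _ _ _ _ _) _; rewrite W0 add0r.
  - apply: le_trans (tri _ _ (0 :: A)) _.
    rewrite -[X in _ <= X]add0r lerD2r.
    by apply: le_trans (le_ins _ _ _ _ _) _; rewrite W0 add0r diag.
split; first by move=> A; rewrite E gd_nil_r.
split; first by move=> A B; rewrite !E sym.
split; first by move=> A B C'; rewrite !E tri.
by move=> A; rewrite !E rc0 diag0.
Qed.
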